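(* Let $W^\pm=(\alpha_1^\pm,\rho_1^\pm,\rho_2^\pm,u_1^\pm,u_2^\pm)$ with $\alpha_1^\pm\in(0,1)$, $\rho_i^\pm>0$, and $S\in\mathbb{R}$ satisfy the Rankine–Hugoniot conditions \begin{align*} &[\![\alpha_1\rho u]\!]=S[\![\alpha_1\rho]\!],\quad [\![\alpha_1\rho_1u_1]\!]=S[\![\alpha_1\rho_1]\!],\quad [\![\rho u]\!]=S[\![\rho]\!],\\ &[\![\alpha_1\rho_1u_1^2+\alpha_2\rho_2u_2^2+\alpha_1p_1+\alpha_2p_2]\!]=S[\![\alpha_1\rho_1u_1+\alpha_2\rho_2u_2]\!],\quad [\![\tfrac12(u_1^2-u_2^2)+\Psi_1-\Psi_2]\!]=S[\![u_1-u_2]\!]. \end{align*} Define the energy dissipation across the discontinuity \[ D=\sum_{i=1}^2\Big(-S\,[\![\alpha_i\rho_i(\varphi_i+\tfrac12u_i^2)]\!]+[\![\alpha_i\rho_iu_i(\Psi_i+\tfrac12u_i^2)]\!]\Big). \] Then the quantities $\alpha_iQ_i$ ($i=1,2$) and $Q$ take the same value on both sides, $[\![\Psi_1+\tfrac12(u_1-S)^2]\!]=[\![\Psi_2+\tfrac12(u_2-S)^2]\!]$, and \[ D=-\sum_{i=1}^2\alpha_iQ_i\,[\![\Psi_i+\tfrac12(u_i-S)^2]\!]=-Q\,[\![\Psi_1+\tfrac12(u_1-S)^2]\!]=-Q\,[\![\Psi_2+\tfrac12(u_2-S)^2]\!]. \] In particular the entropy (energy) admissibility condition $D\le0$ is equivalent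 to $Q\,[\![\Psi_1+\tfrac12(u_1-S)^2]\!]\ge0$.
   Context: For $i=1,2$, $p_i:(0,\infty)\to\mathbb{R}$ is smooth with $p_i'>0$; $\varphi_i$ is an antiderivative of $\rho\mapsto p_i(\rho)/\rho^2$ (the specific internal energy in the isentropic case, the specific free energy $e_i-Ts_i$ in the isothermal case) and $\Psi_i(\rho)=\varphi_i(\rho)+p_i(\rho)/\rho$ (enthalpy, resp. Gibbs energy). For a state: $\alpha_2=1-\alpha_1$, $\rho=\alpha_1\rho_1+\alpha_2\rho_2$, $c_i=\alpha_i\rho_i/\rho$, $u=c_1u_1+c_2u_2$, $p_i=p_i(\rho_i)$, $\varphi_i=\varphi_i(\rho_i)$, $\Psi_i=\Psi_i(\rho_i)$. Mass fluxes: $Q=-\rho(u-S)$, $Q_i=-\rho_i(u_i-S)$. $[\![f]\!]=f(W^+)-f(W^-)$. The admissibility (mathematical entropy) condition for the system is that the total energy $\sum_i\alpha_i\rho_i(\varphi_i+u_i^2/2)$ with flux $\sum_i\alpha_i\rho_iu_i(\Psi_i+u_i^2/2)$ is dissipated, i.e. $D\le 0$ across discontinuities. *)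

(* Defs.v *)
From Stdlib Require Import Reals.
From Coquelicot Require Import Coquelicot.
Open Scope R_scope.

(* A state W = (alpha_1, rho_1, rho_2, u_1, u_2). *)
Record state := mkState { al1 : R; rh1 : R; rh2 : R; ve1 : R; ve2 : R }.

Definition al2 (W : state) : R := 1 - al1 W.
Definition rho (W : state) : R := al1 W * rh1 W + al2 W * rh2 W.
Definition c1 (W : state) : R := al1 W * rh1 W / rho W.
Definition c2 (W : state) : R := al2 W * rh2 W / rho W.
Definition vel (W : state) : R := c1 W * ve1 W + c2 W * ve2 W.

Definition Psi (p phi : R -> R) (x : R) : R := phi x + p x / x.

Definition Qm (S : R) (W : state) : R := - rho W * (vel W - S).
Definition Q1 (S : R) (W : state) : R := - rh1 W * (ve1 W - S).
Definition Q2 (S : R) (W : state) : R := - rh2 W * (ve2 W - S).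

Definition jump (f : state -> R) (Wp Wm : state) : R := f Wp - f Wm.

Definition admissible_state (W : state) : Prop :=
  0 < al1 W < 1 /\ 0 < rh1 W /\ 0 < rh2 W.

Definition Ddiss (p1 p2 phi1 phi2 : R -> R) (S : R) (Wp Wm : state) : R :=
  (- S * jump (fun W => al1 W * rh1 W * (phi1 (rh1 W) + ve1 W ^ 2 / 2)) Wp Wm
   + jump (fun W => al1 W * rh1 W * ve1 W * (Psi p1 phi1 (rh1 W) + ve1 W ^ 2 / 2)) Wp Wm)
  + (- S * jump (fun W => al2 W * rh2 W * (phi2 (rh2 W) + ve2 W ^ 2 / 2)) Wp Wm
   + jump (fun W => al2 W * rh2 W * ve2 W * (Psi p2 phi2 (rh2 W) + ve2 W ^ 2 / 2)) Wp Wm).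

Definition G1 (p1 phi1 : R -> R) (S : R) (W : state) : R :=
  Psi p1 phi1 (rh1 W) + (ve1 W - S) ^ 2 / 2.
Definition G2 (p2 phi2 : R -> R) (S : R) (W : state) : R :=
  Psi p2 phi2 (rh2 W) + (ve2 W - S) ^ 2 / 2.

Definition pressure_law (p phi : R -> R) : Prop :=
  (forall n x, 0 < x -> ex_derive_n p n x) /\
  (forall x, 0 < x -> 0 < Derive p x) /\
  (forall x, 0 < x -> is_derive phi x (p x / x ^ 2)).

(* Main.v *)
Require Import Defs.
From Stdlib Require Import Reals Lra.
From Coquelicot Require Import Coquelicot.
Open Scope R_scope.

Lemma rhovel W : admissible_state W ->
  rho W * vel W = al1 W * rh1 W * ve1 W + al2 W * rh2 W * ve2 W.
Proof.
  intros [[h1 h2] [h3 h4]]. unfold vel, Defs.c1, c2.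
  assert (0 < rho W).
  { unfold rho, al2. nra. }
  unfold rho in *. field. lra.
Qed.

Lemma Qm_eq S W : admissible_state W ->
  Qm S W = - (al1 W * rh1 W * ve1 W + al2 W * rh2 W * ve2 W) + S * rho W.
Proof. intros h. unfold Qm. rewrite <- (rhovel W h). ring. Qed.

Theorem mainTheorem3 (p1 p2 phi1 phi2 : R -> R) (Wp Wm : state) (S : R) :
  pressure_law p1 phi1 -> pressure_law p2 phi2 ->
  admissible_state Wp -> admissible_state Wm ->
  (* Rankine--Hugoniot conditions *)
  jump (fun W => al1 W * rho W * vel W) Wp Wm = S * jump (fun W => al1 W * rho W) Wp Wm ->
  jump (fun W => al1 W * rh1 W * ve1 W) Wp Wm = S * jump (fun W => al1 W * rh1 W) Wp Wm ->
  jump (fun W => rho W * vel W) Wp Wm = S * jump rho Wp Wm ->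
  jump (fun W => al1 W * rh1 W * ve1 W ^ 2 + al2 W * rh2 W * ve2 W ^ 2
                 + al1 W * p1 (rh1 W) + al2 W * p2 (rh2 W)) Wp Wm
    = S * jump (fun W => al1 W * rh1 W * ve1 W + al2 W * rh2 W * ve2 W) Wp Wm ->
  jump (fun W => (ve1 W ^ 2 - ve2 W ^ 2) / 2 + Psi p1 phi1 (rh1 W) - Psi p2 phi2 (rh2 W)) Wp Wm
    = S * jump (fun W => ve1 W - ve2 W) Wp Wm ->
  (* conclusions *)
  al1 Wp * Q1 S Wp = al1 Wm * Q1 S Wm /\
  al2 Wp * Q2 S Wp = al2 Wm * Q2 S Wm /\
  Qm S Wp = Qm S Wm /\
  jump (G1 p1 phi1 S) Wp Wm = jump (G2 p2 phi2 S) Wp Wm /\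
  Ddiss p1 p2 phi1 phi2 S Wp Wm
    = - (al1 Wm * Q1 S Wm * jump (G1 p1 phi1 S) Wp Wm
         + al2 Wm * Q2 S Wm * jump (G2 p2 phi2 S) Wp Wm) /\
  Ddiss p1 p2 phi1 phi2 S Wp Wm = - (Qm S Wm * jump (G1 p1 phi1 S) Wp Wm) /\
  Ddiss p1 p2 phi1 phi2 S Wp Wm = - (Qm S Wm * jump (G2 p2 phi2 S) Wp Wm) /\
  (Ddiss p1 p2 phi1 phi2 S Wp Wm <= 0 <-> 0 <= Qm S Wm * jump (G1 p1 phi1 S) Wp Wm).
Proof.
  intros _ _ Ap Am _ H2 H3 H4 H5.
  assert (Hp := rhovel Wp Ap). assert (Hm := rhovel Wm Am).
  assert (Qp := Qm_eq S Wp Ap). assert (Qmm := Qm_eq S Wm Am).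
  destruct Ap as [[Ap1 Ap2] [Ap3 Ap4]]. destruct Am as [[Am1 Am2] [Am3 Am4]].
  unfold jump in *. rewrite Hp, Hm in H3. clear Hp Hm.
  unfold Psi in *.
  assert (E1 : al1 Wp * Q1 S Wp = al1 Wm * Q1 S Wm) by (unfold Q1; lra).
  assert (E3 : Qm S Wp = Qm S Wm) by (rewrite Qp, Qmm; unfold rho in *; lra).
  assert (E2 : al2 Wp * Q2 S Wp = al2 Wm * Q2 S Wm).
  { rewrite Qp, Qmm in E3. unfold Q2, Q1, rho in *. lra. }
  assert (EG : G1 p1 phi1 S Wp - G1 p1 phi1 S Wm = G2 p2 phi2 S Wp - G2 p2 phi2 S Wm).
  { unfold G1, G2, Psi. lra. }
  assert (Esum : Qm S Wm = al1 Wm * Q1 S Wm + al2 Wm * Q2 S Wm).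
  { rewrite Qmm. unfold Q1, Q2, rho. ring. }
  assert (ED : Ddiss p1 p2 phi1 phi2 S Wp Wm
    = - (al1 Wm * Q1 S Wm * (G1 p1 phi1 S Wp - G1 p1 phi1 S Wm)
         + al2 Wm * Q2 S Wm * (G2 p2 phi2 S Wp - G2 p2 phi2 S Wm))).
  { unfold Ddiss, G1, G2, Psi.
    unfold Q1, Q2 in E1, E2 |- *.
    destruct Wp as [a r1 r2 u1 u2]; destruct Wm as [a' r1' r2' u1' u2'].
    unfold jump, al2 in *; simpl in *.
    set (P1 := p1 r1) in *. set (P2 := p2 r2) in *.
    set (P1' := p1 r1') in *. set (P2' := p2 r2') in *.
    set (F1 := phi1 r1) in *. set (F2 := phi2 r2) in *.
    set (F1' := phi1 r1') in *. set (F2' := phi2 r2') in *.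
    assert (K1 : (F1 + P1 / r1 + (u1 - S)^2/2) * (a * (- r1 * (u1 - S)) - a' * (- r1' * (u1' - S))) = 0)
      by (rewrite E1; ring).
    assert (K2 : (F2 + P2 / r2 + (u2 - S)^2/2) * ((1-a) * (- r2 * (u2 - S)) - (1-a') * (- r2' * (u2' - S))) = 0)
      by (rewrite E2; ring).
    assert (K4 : S * (a * r1 * u1 ^ 2 + (1 - a) * r2 * u2 ^ 2 + a * P1 + (1 - a) * P2 -
     (a' * r1' * u1' ^ 2 + (1 - a') * r2' * u2' ^ 2 + a' * P1' + (1 - a') * P2')) =
    S * (S * (a * r1 * u1 + (1 - a) * r2 * u2 - (a' * r1' * u1' + (1 - a') * r2' * u2')))) by (f_equal; lra).
    assert (K3 : S*S*((a*r1*u1 + (1-a)*r2*u2) - (a'*r1'*u1' + (1-a')*r2'*u2')) = S*S*(S*((a*r1+(1-a)*r2) - (a'*r1'+(1-a')*r2'))))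
      by (f_equal; unfold rho, al2 in H3; simpl in H3; lra).
    assert (r1 <> 0) by lra. assert (r2 <> 0) by lra.
    assert (r1' <> 0) by lra. assert (r2' <> 0) by lra.
    assert (D1 : r1 * (P1 / r1) = P1) by (field; auto).
    assert (D2 : r2 * (P2 / r2) = P2) by (field; auto).
    assert (D1' : r1' * (P1' / r1') = P1') by (field; auto).
    assert (D2' : r2' * (P2' / r2') = P2') by (field; auto).
    set (X1 := P1 / r1) in *. set (X2 := P2 / r2) in *.
    set (X1' := P1' / r1') in *. set (X2' := P2' / r2') in *.
    rewrite <- D1, <- D2, <- D1', <- D2' in K4.
    apply Rminus_diag_eq in K3. apply Rminus_diag_eq in K4.
    apply Rminus_diag_uniq.
    lazymatch type of K1 with ?k1 = 0 =>
    lazymatch type of K2 with ?k2 = 0 =>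
    lazymatch type of K3 with ?k3 = 0 =>
    lazymatch type of K4 with ?k4 = 0 =>
      transitivity (-k1 - k2 + k4 - /2 * k3);
      [field | rewrite K1, K2, K3, K4; ring] end end end end. }
  repeat split; auto.
  - rewrite ED, Esum, EG. ring.
  - rewrite ED, Esum, EG. ring.
  - intros h. rewrite ED, <- EG in h. rewrite Esum. nra.
  - intros h. rewrite ED, <- EG. rewrite Esum in h. nra.
Qed.
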